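(* Let $\epsilon\in(0,1)$, let $m\le k\le n$ be positive integers with $k\ge\frac{m-1}{2\epsilon}$, and let $\mathbf a_1,\dots,\mathbf a_n\in\mathbb R^m$. Let $w^*=\max\{[\det(\sum_{i\in S}\mathbf a_i\mathbf a_i^\top)]^{1/m}: S\subseteq[n],|S|=k\}$, let $(\hat{\mathbf x},\hat w)$ be an optimal solution of the convex relaxation $$\max_{\mathbf x,w}\Big\{w:\ w\le \Big[\det\Big(\sum_{i\in[n]}x_i\mathbf a_i\mathbf a_i^\top\Big)\Big]^{1/m},\ \sum_{i\in[n]}x_i=k,\ \mathbf x\in[0,1]^n\Big\},$$ and let $\mathcal S$ be the random size-$k$ subset of $[n]$ with $\Pr[\mathcal S=S]=\prod_{j\in S}\hat x_j\big/\sum_{\bar S\subseteq[n],|\bar S|=k}\prod_{i\in\bar S}\hat x_i$ for every $S\subseteq[n]$ with $|S|=k$. Then $$\Big\{\mathbb E\Big[\det\Big(\sum_{i\in\mathcal S}\mathbf a_i\mathbf a_i^\top\Big)\Big]\Big\}^{1/m}\ge (0.5-\epsilon)\,w^*.$$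
   Context: $[n]=\{1,\dots,n\}$. *)

(* Defs.v *)
From HB Require Import structures.
From mathcomp Require Import all_boot all_order all_algebra.
From mathcomp Require Import reals exp.
Set Implicit Arguments. Unset Strict Implicit. Unset Printing Implicit Defensive.
Import Order.TTheory GRing.Theory Num.Theory.
Local Open Scope ring_scope.

Section Defs.
Variables (R : realType) (m n : nat).

Definition Mx (a : 'I_n -> 'cV[R]_m) (x : 'I_n -> R) : 'M[R]_m :=
  \sum_(i < n) x i *: (a i *m (a i)^T).

Definition MS (a : 'I_n -> 'cV[R]_m) (S : {set 'I_n}) : 'M[R]_m :=
  \sum_(i in S) (a i *m (a i)^T).

Definition mroot (t : R) : R := powR t (m%:R^-1).

(* w^* = max over |S| = k of det(sum_{i in S} a_i a_i^T)^{1/m}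
   (all values are >= 0, so a max with neutral 0 is the true max) *)
Definition wstar (a : 'I_n -> 'cV[R]_m) (k : nat) : R :=
  \big[Num.max/0]_(S : {set 'I_n} | #|S| == k) mroot (\det (MS a S)).

Definition feasible (a : 'I_n -> 'cV[R]_m) (k : nat) (x : 'I_n -> R) (w : R) : Prop :=
  w <= mroot (\det (Mx a x)) /\ \sum_(i < n) x i = k%:R /\
  (forall i, 0 <= x i <= 1).

Definition optimal (a : 'I_n -> 'cV[R]_m) (k : nat) (x : 'I_n -> R) (w : R) : Prop :=
  feasible a k x w /\ (forall x' w', feasible a k x' w' -> w' <= w).

Definition prob (k : nat) (x : 'I_n -> R) (S : {set 'I_n}) : R :=
  (\prod_(j in S) x j) /
  (\sum_(T : {set 'I_n} | #|T| == k) \prod_(i in T) x i).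

Definition Edet (a : 'I_n -> 'cV[R]_m) (k : nat) (x : 'I_n -> R) : R :=
  \sum_(S : {set 'I_n} | #|S| == k) prob k x S * \det (MS a S).

End Defs.

(* Main.v *)
Require Import Defs.
From HB Require Import structures.
From mathcomp Require Import all_boot all_order all_algebra.
From mathcomp Require Import reals exp.
From mathcomp Require Import ring lra zify.
Set Implicit Arguments. Unset Strict Implicit. Unset Printing Implicit Defensive.
Import Order.TTheory GRing.Theory Num.Theory.
Local Open Scope ring_scope.

Section Esym.
Variables (R : realType) (n : nat) (x : 'I_n -> R).
Hypothesis x01 : forall i, 0 <= x i <= 1.

Definition ww (S : {set 'I_n}) := \prod_(i in S) x i.
Definition EE (Y : {set 'I_n}) (l : nat) :=
  \sum_(S : {set 'I_n} | (S \subset Y) && (#|S| == l)) ww S.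
Definition sY (Y : {set 'I_n}) := \sum_(i in Y) x i.

Lemma x_ge0 i : 0 <= x i. Proof. by case/andP: (x01 i). Qed.
Lemma x_le1 i : x i <= 1. Proof. by case/andP: (x01 i). Qed.

Lemma ww_ge0 S : 0 <= ww S.
Proof. by apply: prodr_ge0 => i _; apply: x_ge0. Qed.

Lemma EE_ge0 Y l : 0 <= EE Y l.
Proof. by apply: sumr_ge0 => S _; apply: ww_ge0. Qed.

Lemma sY_ge0 Y : 0 <= sY Y.
Proof. by apply: sumr_ge0 => i _; apply: x_ge0. Qed.

Lemma EE0 Y : EE Y 0 = 1.
Proof.
rewrite /EE (bigD1 set0) /=; last by rewrite sub0set cards0.
rewrite big1 ?addr0 /ww ?big_set0 // => S /andP[/andP[_ /eqP/cards0_eq ->]].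
by rewrite eqxx.
Qed.

Lemma EE_set0 l : EE set0 l.+1 = 0.
Proof.
rewrite /EE big1 // => S /andP[]; rewrite subset0 => /eqP ->.
by rewrite cards0.
Qed.

Lemma sY_add (t : 'I_n) (Y : {set 'I_n}) : t \notin Y -> sY (t |: Y) = x t + sY Y.
Proof. by move=> tY; rewrite /sY big_setU1. Qed.

Lemma EE_add (t : 'I_n) (Y : {set 'I_n}) l : t \notin Y -> EE (t |: Y) l.+1 = EE Y l.+1 + x t * EE Y l.
Proof.
move=> tY; rewrite /EE (bigID (fun S : {set 'I_n} => t \in S)) /= addrC; congr (_ + _).
  apply: eq_bigl => S; case tS: (t \in S); rewrite /= ?andbF ?andbT.
    apply/esym/negbTE; apply/negP => /andP[/subsetP /(_ t tS) tY' _].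
    by rewrite tY' in tY.
  congr (_ && _); apply/idP/idP => H; apply/subsetP => i iS.
    move/subsetP: H => /(_ i iS); rewrite in_setU1; case: eqP => // ei.
    by rewrite ei tS in iS.
  by rewrite in_setU1 (subsetP H) ?orbT.
rewrite mulr_sumr.
rewrite (reindex_onto (fun S1 => t |: S1) (fun S => S :\ t)); last first.
  by move=> S /andP[_ tS]; rewrite setD1K.
apply: eq_big => S1.
  rewrite setU11 andbT.
  case tS1: (t \in S1).
    have -> : ((t |: S1) :\ t == S1) = false.
      by apply/negbTE; apply/eqP => /setP /(_ t); rewrite !inE eqxx tS1.
    rewrite andbF; apply/esym/negbTE; apply/negP => /andP[/subsetP /(_ t tS1) tY' _].
    by rewrite tY' in tY.
  rewrite setU1K ?tS1 // eqxx andbT cardsU1 tS1 add1n eqSS.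
  congr (_ && _); apply/idP/idP => H; apply/subsetP => i iS.
    move/subsetP: H => /(_ i); rewrite !inE iS orbT => /(_ isT) /orP[/eqP ei|//].
    by rewrite ei tS1 in iS.
  by rewrite !inE in iS *; case/orP: iS => [->//|/(subsetP H) ->]; rewrite orbT.
move=> /andP[_ /eqP tS1].
have tS : t \notin S1 by rewrite -tS1 !inE eqxx.
by rewrite /ww big_setU1.
Qed.


Lemma EE_bounds Y l :
  (l.+1)%:R * EE Y l.+1 <= sY Y * EE Y l /\
  (sY Y - l%:R) * EE Y l <= (l.+1)%:R * EE Y l.+1.
Proof.
have [N] := ubnP #|Y|; elim: N Y l => // N IH Y l.
rewrite ltnS => cY.
have [->|/set0Pn [t tY]] := eqVneq Y set0.
  rewrite EE_set0 /sY big_set0 mulr0 mul0r; split => //.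
  by rewrite sub0r mulNr oppr_le0; apply: mulr_ge0 => //; apply: EE_ge0.
have tY' : t \notin Y :\ t by rewrite !inE eqxx.
have cY' : (#|Y :\ t| < N)%N.
  by move: cY; rewrite (cardsD1 t Y) tY.
rewrite -(setD1K tY) !EE_add // sY_add //.
move: (x01 t) => /andP[x0 x1].
case: l => [|l].
  have [H1 H2] := IH _ 0%N cY'.
  rewrite !EE0 in H1 H2 *; rewrite !mulr1 !mul1r in H1 H2 *.
  by split; lra.
rewrite EE_add //.
have [H1 H2] := IH _ l.+1 cY'.
have [H3 H4] := IH _ l cY'.
set s := sY _ in H1 H2 H3 H4 *.
set e0 := EE _ l in H3 H4 *.
set e1 := EE _ l.+1 in H1 H2 H3 H4 *.
set e2 := EE _ l.+2 in H1 H2 *.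
have e0p : 0 <= e0 by apply: EE_ge0.
have e1p : 0 <= e1 by apply: EE_ge0.
have e2p : 0 <= e2 by apply: EE_ge0.
rewrite -!natr1 in H1 H2 H3 H4 *.
set L := l%:R in H1 H2 H3 H4 *.
have L0 : 0 <= L by apply: ler0n.
have sp : 0 <= s by apply: sY_ge0.
have h1 := mulr_ge0 x0 e0p.
have h2 : 0 <= x t * (1 - x t) * e0 by rewrite mulr_ge0 // mulr_ge0 // subr_ge0.
have h3 : x t * ((L + 1) * e1) <= x t * (s * e0) by apply: ler_wpM2l.
have h4 : x t * ((s - L) * e0) <= x t * ((L + 1) * e1) by apply: ler_wpM2l.
have h5 : 0 <= x t * x t * e0 by rewrite !mulr_ge0.
split; nra.
Qed.

Lemma sY_le_T Y : sY Y <= sY setT.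
Proof.
rewrite /sY [X in _ <= X](eq_bigl xpredT) ?big_mkcond /=; last by move=> i; rewrite in_setT.
by apply: ler_sum => i _; case: ifP => _ //; apply: x_ge0.
Qed.

Lemma EE_pos (k : nat) : sY setT = k%:R -> forall l, (l <= k)%N -> 0 < EE setT l.
Proof.
move=> sk; elim=> [|l IH] lk; first by rewrite EE0.
have [_ H] := EE_bounds setT l.
have IH' := IH (ltnW lk).
rewrite sk in H.
have : 0 < (k%:R - l%:R) * EE setT l.
  by apply: mulr_gt0 => //; rewrite subr_gt0 ltr_nat.
move=> /lt_le_trans /(_ H); rewrite pmulr_rgt0 //.
Qed.

Lemma EE_chain (k m : nat) (q : R) : sY setT = k%:R -> (m <= k)%N -> 0 <= q ->
  k%:R <= q * (k - m + 1)%:R ->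
  forall T : {set 'I_n}, (#|T| <= m)%N ->
  EE setT k <= (1 + q) ^+ #|T| * EE (~: T) (k - #|T|).
Proof.
move=> sk mk q0 hq T0 cT0.
suff: forall j (T : {set 'I_n}), #|T| = j -> (j <= m)%N ->
  EE setT k <= (1 + q) ^+ j * EE (~: T) (k - j) by move/(_ _ T0 erefl cT0).
clear T0 cT0; elim=> [|j IH] T cT jm.
  by rewrite (cards0_eq cT) setC0 subn0 expr0 mul1r.
have /set0Pn [t tT] : T != set0 by apply/eqP => T0; rewrite T0 cards0 in cT.
have cT0 : #|T :\ t| = j by move: cT; rewrite (cardsD1 t T) tT add1n => -[].
have := IH _ cT0 (ltnW jm).
have -> : ~: (T :\ t) = t |: ~: T.
  by apply/setP => i; rewrite !inE; case: eqP => // ->; rewrite tT.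
have -> : (k - j = (k - j.+1).+1)%N by rewrite subnS prednK // subn_gt0 (leq_trans jm).
have tC : t \notin ~: T by rewrite inE tT.
rewrite EE_add // => H.
apply: (le_trans H); rewrite exprSr -mulrA; apply: ler_wpM2l; first by rewrite exprn_ge0 // addr_ge0.
have [H1 _] := EE_bounds (~: T) (k - j.+1).
set l := (k - j.+1)%N in H1 *.
have lk : (k - m + 1 <= l.+1)%N by rewrite /l; lia.
have sl : sY (~: T) <= q * (l.+1)%:R.
  apply: (le_trans (sY_le_T _)); rewrite sk (le_trans hq) //; apply: ler_wpM2l => //; rewrite ler_nat; exact: lk.
have e0 := EE_ge0 (~: T) l.
have e1 := EE_ge0 (~: T) l.+1.
have xt1 := x_le1 t.
have xt0 := x_ge0 t.
have lp : 0 < (l.+1)%:R :> R by rewrite ltr0n.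
have H2 : EE (~: T) l.+1 <= q * EE (~: T) l.
  rewrite -(ler_pM2l lp).
  apply: (le_trans H1); rewrite mulrA [_ * q]mulrC; apply: ler_wpM2r => //.
have : x t * EE (~: T) l <= EE (~: T) l by rewrite ler_piMl.
lra.
Qed.


Lemma sup_sum (k : nat) (T : {set 'I_n}) : (#|T| <= k)%N ->
  \sum_(S : {set 'I_n} | (#|S| == k) && (T \subset S)) ww S = ww T * EE (~: T) (k - #|T|).
Proof.
move=> Tk; rewrite /EE mulr_sumr.
rewrite (reindex_onto (fun S1 => T :|: S1) (fun S => S :\: T)); last first.
  move=> S /andP[_ TS]; apply/setP => i; rewrite !inE.
  by case iT: (i \in T) => //=; rewrite (subsetP TS).
apply: eq_big => S1.
  rewrite subsetUl andbT.
  case dS: [disjoint T & S1].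
    have -> : (T :|: S1) :\: T = S1.
      apply/setP => i; rewrite !inE; case iT: (i \in T) => //=.
      by move/disjointFr: dS => /(_ i iT) ->.
    rewrite eqxx andbT cardsU (disjoint_setI0 dS) cards0 subn0.
    have -> : S1 \subset ~: T by rewrite -disjoints_subset disjoint_sym dS.
    rewrite /=; apply/eqP/eqP => [<-|->]; first by rewrite addKn.
    by rewrite subnKC.
  have -> : ((T :|: S1) :\: T == S1) = false.
    apply/negbTE/eqP => H; move/negbT: dS; rewrite -H.
    by rewrite disjoint_sym disjoints_subset subsetDr.
  have -> : S1 \subset ~: T = false.
    by apply/negbTE; rewrite -disjoints_subset disjoint_sym dS.
  by rewrite andbF.
move=> /andP[_ /eqP <-].
rewrite /ww (eq_bigl [predU T & (T :|: S1) :\: T]); last by move=> i; rewrite !inE; case: (i \in T).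
by rewrite bigU // disjoint_sym disjoints_subset subsetDr.
Qed.
End Esym.
Section Det.
Variables (R : realType) (m n : nat) (a : 'I_n -> 'cV[R]_m).

Definition gg (f : {ffun 'I_m -> 'I_n}) : R :=
  (\prod_i a (f i) i 0) * \det (\matrix_(i, j) a (f i) j 0).

Definition im (f : {ffun 'I_m -> 'I_n}) : {set 'I_n} := [set f i | i in [set: 'I_m]].

Definition cc (T : {set 'I_n}) : R :=
  \sum_(f : {ffun 'I_m -> 'I_n} | injectiveb f && (im f == T)) gg f.

Lemma Mx_entry x i j : Mx a x i j = \sum_l x l * (a l i 0 * a l j 0).
Proof.
rewrite /Mx summxE; apply: eq_bigr => l _.
by rewrite !mxE big_ord1 !mxE.
Qed.

Lemma det_Mx_phi x :
  \det (Mx a x) = \sum_(f : {ffun 'I_m -> 'I_n}) (\prod_i x (f i)) * gg f.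
Proof.
rewrite /determinant.
under eq_bigr => s _.
  under eq_bigr => i _ do rewrite Mx_entry.
  rewrite bigA_distr_bigA mulr_sumr.
  over.
rewrite exchange_big /=; apply: eq_bigr => f _.
rewrite /gg /determinant mulr_sumr mulr_sumr; apply: eq_bigr => s _.
rewrite !mulrA [_ * (-1) ^+ _]mulrC -!mulrA; congr (_ * _).
rewrite -!big_split /=; apply: eq_bigr => i _.
by rewrite !mxE mulrA.
Qed.

Lemma gg_noninj (f : {ffun 'I_m -> 'I_n}) : ~~ injectiveb f -> gg f = 0.
Proof.
case/injectivePn => i [j ij fij].
rewrite /gg (determinant_alternate ij) ?mulr0 // => c.
by rewrite !mxE fij.
Qed.

Lemma card_im (f : {ffun 'I_m -> 'I_n}) : injectiveb f -> #|im f| = m.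
Proof. by move/injectiveP=> fi; rewrite /im card_imset // cardsT card_ord. Qed.

Lemma det_Mx_T x :
  \det (Mx a x) = \sum_(T : {set 'I_n} | #|T| == m) (\prod_(i in T) x i) * cc T.
Proof.
rewrite det_Mx_phi (bigID (fun f : {ffun 'I_m -> 'I_n} => injectiveb f)) /=.
rewrite [X in _ + X]big1 ?addr0; last by move=> f /gg_noninj ->; rewrite mulr0.
rewrite (partition_big im (fun T => #|T| == m)) /=; last by move=> f /card_im ->.
apply: eq_bigr => T _; rewrite /cc mulr_sumr; apply: eq_bigr => f /andP[fi /eqP <-].
congr (_ * _); rewrite /im big_imset /=; last by move=> i j _ _; apply: (injectiveP _ fi).
by apply: eq_bigl => i; rewrite in_setT.
Qed.

Lemma Mx_ind (S : {set 'I_n}) : Mx a (fun i => (i \in S)%:R) = MS a S.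
Proof.
rewrite /Mx /MS [RHS]big_mkcond /=; apply: eq_bigr => i _.
by case: (i \in S); rewrite ?scale1r ?scale0r.
Qed.

Lemma prod_ind (T S : {set 'I_n}) :
  \prod_(i in T) ((i \in S)%:R : R) = (T \subset S)%:R.
Proof.
case: (boolP (T \subset S)) => TS.
  by apply: big1 => i iT; rewrite (subsetP TS).
case/subsetPn: TS => i iT iS.
by rewrite (bigD1 i) //= (negbTE iS) mul0r.
Qed.

Lemma det_MS (S : {set 'I_n}) :
  \det (MS a S) = \sum_(T : {set 'I_n} | #|T| == m) (T \subset S)%:R * cc T.
Proof.
rewrite -Mx_ind det_Mx_T; apply: eq_bigr => T _; by rewrite prod_ind.
Qed.

Lemma cc_ge0 (T : {set 'I_n}) : #|T| == m -> 0 <= cc T.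
Proof.
move=> cT.
case: (pickP (fun f : {ffun 'I_m -> 'I_n} => injectiveb f && (im f == T))); last first.
  by move=> H; rewrite /cc big_pred0.
move=> f0 /andP[f0i /eqP f0T].
have : \det (MS a T) = cc T.
  rewrite det_MS (bigD1 T) //= subxx mul1r big1 ?addr0 // => T' /andP[cT' T'T].
  have -> : (T' \subset T) = false.
    apply/negbTE/negP => sub; move/negP: T'T; apply; rewrite eqEcard sub /=.
    by rewrite (eqP cT) (eqP cT').
  by rewrite mul0r.
move=> <-.
pose B : 'M[R]_m := \matrix_(r, j) a (f0 j) r 0.
have -> : MS a T = B *m B^T.
  apply/matrixP => r c; rewrite /MS -f0T /im big_imset /=; last first.
    by move=> i j _ _; apply: (injectiveP _ f0i).
  rewrite summxE !mxE (eq_bigl xpredT) /=; last by move=> i; rewrite in_setT.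
  by apply: eq_bigr => j _; rewrite !mxE big_ord1 !mxE.
by rewrite det_mulmx det_tr -expr2 sqr_ge0.
Qed.
End Det.

Unset Implicit Arguments.
Set Strict Implicit.

Theorem corollary1 (R : realType) (eps : R) (m k n : nat)
  (a : 'I_n -> 'cV[R]_m) (xhat : 'I_n -> R) (what : R) :
  0 < eps < 1 ->
  (0 < m)%N -> (m <= k)%N -> (k <= n)%N ->
  (m%:R - 1) / (2 * eps) <= k%:R ->
  optimal a k xhat what ->
  mroot m (Edet a k xhat) >= (2^-1 - eps) * wstar a k.
Proof.
move=> /andP[e0 e1] m0 mk kn hk [[fw [sx x01]] opt].
set c := 2^-1 - eps.
have wst0 : 0 <= wstar a k.
  rewrite /wstar; elim/big_ind: _ => //; last by move=> S _; apply: powR_ge0.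
  by move=> u v hu hv; rewrite le_max hu.
case: (lerP c 0) => hc.
  apply: (@le_trans _ _ 0); last by apply: powR_ge0.
  by rewrite mulr_le0_ge0.
have n0 : (0 < n)%N by apply: (leq_trans m0 (leq_trans mk kn)).
have what0 : 0 <= what.
  apply: (opt (fun _ => k%:R / n%:R) 0); split; first by apply: powR_ge0.
  split.
    rewrite sumr_const card_ord -[_ *+ n]mulr_natr divfK //.
    by rewrite pnatr_eq0 -lt0n.
  move=> i; rewrite divr_ge0 ?ler0n //= ler_pdivrMr ?ltr0n // mul1r ler_nat //.
have wle : wstar a k <= what.
  rewrite /wstar; apply: bigmax_le => // S cS.
  apply: (opt (fun i => (i \in S)%:R)); split; first by rewrite Mx_ind.
  split.
    rewrite (eq_bigr (fun i => if i \in S then 1 else 0)); last by move=> i _; case: (i \in S).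
    by rewrite -big_mkcond /= sumr_const (eqP cS).
  by move=> i; case: (i \in S); rewrite ?ler01 ?lexx.
have ehalf : eps < 2^-1 by rewrite /c subr_gt0 in hc.
have d0 : 0 < 1 - 2 * eps by lra.
set q := (1 - 2 * eps)^-1.
have q0 : 0 <= q by rewrite /q invr_ge0 ltW.
set K := 1 + q.
have K0 : 0 < K by rewrite /K; lra.
have sk : sY xhat setT = k%:R.
  by rewrite -sx /sY; apply: eq_bigl => i; rewrite in_setT.
have hq : k%:R <= q * (k - m + 1)%:R.
  rewrite natrD natrB // mulrC ler_pdivlMr //.
  move: hk; rewrite ler_pdivrMr ?mulr_gt0 //; lra.
have cK : c <= K^-1.
  rewrite -(ler_pM2r K0) mulVf ?gt_eqF // /K /q mulrDr mulr1 /c.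
  have -> : (2^-1 - eps) * (1 - 2 * eps)^-1 = 2^-1.
    by field; rewrite (gt_eqF d0).
  lra.
set D := \sum_(T : {set 'I_n} | #|T| == k) \prod_(i in T) xhat i.
have DE : D = EE xhat setT k by apply: eq_bigl => T; rewrite subsetT.
have D0 : 0 < D by rewrite DE; apply: (EE_pos x01 sk).
set f := \det (Mx a xhat).
have fE : f = \sum_(T : {set 'I_n} | #|T| == m) ww xhat T * cc a T by rewrite /f det_Mx_T.
have f0 : 0 <= f.
  by rewrite fE; apply: sumr_ge0 => T cT; rewrite mulr_ge0 ?ww_ge0 ?cc_ge0.
have key : \sum_(S : {set 'I_n} | #|S| == k) ww xhat S * \det (MS a S) =
    \sum_(T : {set 'I_n} | #|T| == m) cc a T * (ww xhat T * EE xhat (~: T) (k - m)).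
  under eq_bigr => S _ do rewrite det_MS mulr_sumr.
  rewrite exchange_big /=; apply: eq_bigr => T cT.
  have -> : (k - m = k - #|T|)%N by rewrite (eqP cT).
  rewrite -sup_sum ?(eqP cT) // mulr_sumr big_mkcondr /=.
  by apply: eq_bigr => S _; case: (T \subset S); rewrite ?mul1r ?mul0r ?mulr0 // mulrC.
have low : K^-1 ^+ m * D * f <= \sum_(S : {set 'I_n} | #|S| == k) ww xhat S * \det (MS a S).
  rewrite key fE mulr_sumr; apply: ler_sum => T cT.
  have hE : K^-1 ^+ m * D <= EE xhat (~: T) (k - m).
    have hT : (#|T| <= m)%N by rewrite (eqP cT).
    have := EE_chain x01 sk mk q0 hq hT; rewrite (eqP cT) -DE => hc'.
    apply: (le_trans (ler_wpM2l _ hc')); first by rewrite exprn_ge0 // invr_ge0 ltW.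
    by rewrite mulrA -exprMn mulVf ?gt_eqF // expr1n mul1r.
  apply: (@le_trans _ _ ((ww xhat T * cc a T) * EE xhat (~: T) (k - m))).
    rewrite [X in X <= _]mulrC; apply: ler_wpM2l => //.
    by rewrite mulr_ge0 ?ww_ge0 ?cc_ge0.
  by rewrite le_eqVlt; apply/orP; left; apply/eqP; ring.
have Ed : Edet a k xhat = D^-1 * \sum_(S : {set 'I_n} | #|S| == k) ww xhat S * \det (MS a S).
  rewrite /Edet mulr_sumr; apply: eq_bigr => S _.
  by rewrite /prob /ww -/D; ring.
have Ef : (K^-1) ^+ m * f <= Edet a k xhat.
  by rewrite Ed -(ler_pM2l D0) !mulrA mulfV ?gt_eqF // mul1r [D * _]mulrC.
have Ecf : c ^+ m * f <= Edet a k xhat.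
  apply: le_trans Ef; apply: ler_wpM2r => //.
  apply: lerXn2r => //; rewrite nnegrE; [exact: ltW | by rewrite invr_ge0 ltW].
have cm0 : 0 <= c ^+ m * f by apply: mulr_ge0 => //; apply: exprn_ge0; exact: ltW.
have h1 : mroot m (c ^+ m * f) <= mroot m (Edet a k xhat).
  rewrite /mroot; apply: ge0_ler_powR; first by rewrite invr_ge0 ler0n.
  - by rewrite nnegrE.
  - by rewrite nnegrE (le_trans cm0 Ecf).
  - exact: Ecf.
have mr : mroot m (c ^+ m * f) = c * mroot m f.
  rewrite /mroot (powRM _ (exprn_ge0 _ (ltW hc)) f0).
  rewrite -[c ^+ m](@powR_mulrn _ c m (ltW hc)) -powRrM.
  by rewrite mulfV ?powRr1 ?ltW // pnatr_eq0 -lt0n.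
rewrite mr in h1; apply: le_trans h1.
apply: ler_wpM2l; first exact: ltW.
exact: (le_trans wle fw).
Qed.
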